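(* Let $N_A\ge 1$ be an integer, let $d_1,\dots,d_{N_A}\in\mathbb{R}$, and let $G_N$ be a finite set with $|G_N|$ elements. Consider the optimization problem: minimize $d\in\mathbb{R}$ subject to $$d-\sum_{i\in G_N} x_{ik}\ \ge\ d_k\quad \forall k=1,\dots,N_A,\qquad \sum_{k=1}^{N_A}x_{ik}=1\quad\forall i\in G_N,\qquad x_{ik}\in\{0,1\}.$$ Let $d_{\bar k}=\max_{k=1,\dots,N_A} d_k$ and $\Delta N=\sum_{i=1}^{N_A}\lfloor d_{\bar k}-d_i\rfloor$. Then the optimal value $d^*$ equals $$d^*=\begin{cases} d_{\bar k}, & \text{if } |G_N|\le \Delta N,\\[4pt] \displaystyle\min_{j=1,\dots,N_A}\left\{ d_j+\left\lceil \frac{|G_N|+\sum_{k=1}^{N_A}\lceil d_k-d_j\rceil}{N_A}\right\rceil\right\}, & \text{otherwise.}\end{cases}$$ *)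

(* Defs.v *)
From mathcomp Require Import all_boot all_order all_algebra.
From mathcomp Require Import all_classical all_reals.
Set Implicit Arguments. Unset Strict Implicit. Unset Printing Implicit Defensive.
Import Order.TTheory GRing.Theory Num.Theory.
Local Open Scope ring_scope.

(* MathComp (R : realType).  Agents are indexed by 'I_NA (k = 1..NA
   in the paper corresponds to k : 'I_NA), the finite set G_N is a finType G,
   and |G_N| = #|G|. *)

Definition feasible (R : realType) (G : finType) (NA : nat)
  (dk : 'I_NA -> R) (d : R) : Prop :=
  exists x : G -> 'I_NA -> R,
    [/\ forall i k, x i k = 0 \/ x i k = 1,
        forall k, d - \sum_(i : G) x i k >= dk k
      & forall i, \sum_(k < NA) x i k = 1].

Definition optimal_value (R : realType) (G : finType) (NA : nat)
  (dk : 'I_NA -> R) (v : R) : Prop :=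
  feasible G dk v /\ forall d, feasible G dk d -> v <= d.

(* d_kbar = max_k d_k  (k0 is any index, used as the seed of the fold). *)
Definition dmax (R : realType) (NA : nat) (k0 : 'I_NA) (dk : 'I_NA -> R) : R :=
  \big[Num.max/dk k0]_(k < NA) dk k.

Definition DeltaN (R : realType) (NA : nat) (k0 : 'I_NA) (dk : 'I_NA -> R) : int :=
  \sum_(i < NA) Num.floor (dmax k0 dk - dk i).

Definition candidate (R : realType) (NA : nat) (nG : nat)
  (dk : 'I_NA -> R) (j : 'I_NA) : R :=
  dk j + (Num.ceil ((nG%:R + \sum_(k < NA) ((Num.ceil (dk k - dk j))%:~R : R))
                    / NA%:R))%:~R.

Definition min_candidate (R : realType) (NA : nat) (k0 : 'I_NA) (nG : nat)
  (dk : 'I_NA -> R) : R :=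
  \big[Num.min/candidate nG dk k0]_(j < NA) candidate nG dk j.

(* Main.v *)
Require Import Defs.
From mathcomp Require Import all_boot all_order all_algebra.
From mathcomp Require Import all_classical all_reals.
Set Implicit Arguments. Unset Strict Implicit. Unset Printing Implicit Defensive.
Import Order.TTheory GRing.Theory Num.Theory.
Local Open Scope ring_scope.

Lemma assign_exists (G : finType) (NA : nat) (k0 : 'I_NA) :
  forall (m : nat) (S : {set G}) (n : 'I_NA -> nat), #|S| = m ->
  (#|S| <= \sum_(k < NA) n k)%N ->
  exists f : G -> 'I_NA, forall k, (#|[set i in S | f i == k]| <= n k)%N.
Proof.
elim=> [|m IH] S n hS hsum.
  exists (fun _ => k0) => k.
  have: #|S| == 0%N by rewrite hS.
  rewrite cards_eq0 => /eqP ->.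
  rewrite (_ : [set i in finset.set0 | _] = finset.set0) ?cards0 //.
  by apply/setP => i; rewrite !inE.
have [i iS] : exists i, i \in S.
  by apply/set0Pn; rewrite -card_gt0 hS.
have [k1 hk1] : exists k1, (0 < n k1)%N.
  case: (pickP (fun k => (0 < n k)%N)) => [k2 hk2|h0]; first by exists k2.
  move: hsum; rewrite big1 ?hS // => k _; move: (h0 k) => /negbT; rewrite lt0n negbK => /eqP.
  done.
set n' := fun k => if k == k1 then (n k).-1 else n k.
have hS' : #|S :\ i| = m by move: (cardsD1 i S); rewrite iS hS add1n => -[].
have hsum' : (#|S :\ i| <= \sum_(k < NA) n' k)%N.
  have e1 : \sum_(k < NA | k != k1) n' k = \sum_(k < NA | k != k1) n k.
    by apply: eq_bigr => k /negbTE; rewrite /n' => ->.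
  move: hsum; rewrite (bigD1 k1) //= (bigD1 k1 (P := predT)) //= e1 /n' eqxx.
  by rewrite hS hS' -(prednK hk1) addSn ltnS.
have [f' hf'] := IH _ _ hS' hsum'.
exists (fun j => if j == i then k1 else f' j) => k.
have sub : [set j in S | (if j == i then k1 else f' j) == k] \subset
           i |: [set j in S :\ i | f' j == k].
  apply/fintype.subsetP => j; rewrite !inE; case: (eqVneq j i) => [->|nji] /=.
    by rewrite ?eqxx.
  by move=> /andP[-> ->]; rewrite ?orbT.
case: (eqVneq k k1) => [ek|nk].
  subst k.
  apply: leq_trans (subset_leq_card sub) _.
  have := hf' k1; rewrite /n' eqxx => h.
  by rewrite cardsU1 -(prednK hk1) -add1n leq_add // leq_b1.
have sub2 : [set j in S | (if j == i then k1 else f' j) == k] \subset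
           [set j in S :\ i | f' j == k].
  apply/fintype.subsetP => j; rewrite !inE; case: (eqVneq j i) => [->|nji] /=.
    by rewrite eq_sym (negbTE nk) ?andbF.
  by move=> /andP[-> ->].
apply: leq_trans (subset_leq_card sub2) _.
by have := hf' k; rewrite /n' (negbTE nk).
Qed.

Lemma sum_ind_card (R : realType) (G : finType) (P : pred G) :
  \sum_(i : G) ((P i)%:R : R) = (#|[set i in [set: G] | P i]|)%:R.
Proof.
rewrite (eq_bigr (fun i => if P i then 1 else 0)); last by move=> i _; case: (P i).
rewrite -big_mkcond /= sumr_const. congr (_ *+ _). by apply: eq_card => i; rewrite !inE.
Qed.

Definition Fl (R : realType) NA (dk : 'I_NA -> R) (d : R) : int :=
  \sum_(k < NA) Num.floor (d - dk k).

Lemma feas_suff (R : realType) (G : finType) NA (k0 : 'I_NA) (dk : 'I_NA -> R) d :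
  (forall k, dk k <= d) -> #|G|%:Z <= Fl dk d -> feasible G dk d.
Proof.
move=> hle hF.
pose n k := `|Num.floor (d - dk k)|%N.
have nE k : (n k)%:Z = Num.floor (d - dk k).
  by rewrite /n gez0_abs // floor_ge0 subr_ge0.
have hs : (#|[set: G]| <= \sum_(k < NA) n k)%N.
  by rewrite cardsT -lez_nat (big_morph Posz PoszD (erefl _)) (eq_bigr _ (fun k _ => nE k)).
have [f hf] := assign_exists k0 (erefl _) hs.
exists (fun i k => ((f i == k)%:R : R)); split.
- by move=> i k; case: (f i == k); [right|left].
- move=> k; rewrite (sum_ind_card R (fun i => f i == k)) lerBrDr addrC -lerBrDr.
  apply: le_trans (_ : ((n k)%:Z)%:~R <= _); first by rewrite ler_nat.
  by rewrite nE floor_le.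
- move=> i; rewrite (bigD1 (f i)) //= eqxx big1 ?addr0 // => k.
  by rewrite eq_sym => /negbTE ->.
Qed.

Lemma feas_nec (R : realType) (G : finType) NA (dk : 'I_NA -> R) d :
  feasible G dk d -> (forall k, dk k <= d) /\ #|G|%:Z <= Fl dk d.
Proof.
case=> x [h01 hk h1].
pose c k := #|[set i in [set: G] | x i k == 1]|.
have cE k : \sum_i x i k = (c k)%:R.
  rewrite -(sum_ind_card R (fun i => x i k == 1)); apply: eq_bigr => i _.
  by case: (h01 i k) => ->; rewrite ?eqxx // eq_sym oner_eq0.
have hck k : dk k + (c k)%:R <= d by rewrite -lerBrDr -cE; exact: hk.
split.
  by move=> k; apply: le_trans (hck k); rewrite lerDl ler0n.
have sumc : (\sum_k c k)%N = #|G|.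
  apply/eqP; rewrite -(eqr_nat R) natr_sum.
  rewrite (eq_bigr _ (fun k _ => esym (cE k))) exchange_big /=.
  by rewrite (eq_bigr _ (fun i _ => h1 i)) sumr_const.
rewrite -sumc (big_morph Posz PoszD (erefl _)) /Fl; apply: ler_sum => k _.
by rewrite floor_ge_int lerBrDr addrC; exact: hck k.
Qed.

Lemma Fl_shift (R : realType) NA (dk : 'I_NA -> R) j (m : int) :
  Fl dk (dk j + m%:~R) = m *+ NA - \sum_(k < NA) Num.ceil (dk k - dk j).
Proof.
rewrite /Fl; transitivity (\sum_(k < NA) (m - Num.ceil (dk k - dk j))).
  apply: eq_bigr => k _.
  by rewrite addrAC floorDrz ?intr_int // intrKfloor floorNceil opprB addrC.
by rewrite sumrB sumr_const card_ord.
Qed.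

Lemma conv (R : realType) NA (hNA : (0 < NA)%N) (N : nat) (dk : 'I_NA -> R) j (m : int) :
  ((N%:R + \sum_(k < NA) ((Num.ceil (dk k - dk j))%:~R : R)) / NA%:R <= m%:~R)
  = (N%:Z + \sum_(k < NA) Num.ceil (dk k - dk j) <= m *+ NA).
Proof.
rewrite ler_pdivrMr ?ltr0n // -(ler_int R) intrD rmorph_sum rmorphMn /=.
by rewrite mulr_natr.
Qed.

Lemma bigop_attain (R : realType) NA (F : 'I_NA -> R) k0 (op : R -> R -> R) :
  (forall x y, op x y = x \/ op x y = y) ->
  exists j, \big[op/F k0]_(k < NA) F k = F j.
Proof.
move=> hop.
apply: (big_ind (fun y => exists j, y = F j)); [by exists k0 | | by move=> k _; exists k].
move=> x y [a ->] [b ->]; case: (hop (F a) (F b)) => ->; [exists a|exists b] => //.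
Qed.

Lemma max_or (R : realType) (x y : R) : Num.max x y = x \/ Num.max x y = y.
Proof. by case: (leP x y) => h; [right|left]. Qed.

Lemma min_or (R : realType) (x y : R) : Num.min x y = x \/ Num.min x y = y.
Proof. by case: (leP x y) => h; [left|right]. Qed.

Lemma cand_F (R : realType) NA (hNA : (0 < NA)%N) (N : nat) (dk : 'I_NA -> R) j :
  N%:Z <= Fl dk (candidate N dk j).
Proof.
rewrite /candidate Fl_shift lerBrDr -conv //; exact: ceil_ge.
Qed.

Lemma cand_le (R : realType) NA (hNA : (0 < NA)%N) (N : nat) (k0 : 'I_NA)
  (dk : 'I_NA -> R) d :
  N%:Z <= Fl dk d -> exists j, candidate N dk j <= d.
Proof.
move=> hN.
pose s k := dk k + (Num.floor (d - dk k))%:~R.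
have [j hj] := bigop_attain s k0 (@max_or R).
have hsj k : s k <= s j by rewrite -hj; exact: le_bigmax.
exists j.
set m := Num.floor (d - dk j).
have hsd : s j <= d by rewrite /s addrC -lerBrDr floor_le.
apply: le_trans hsd; rewrite /candidate /s lerD2l ler_int ceil_le_int conv //.
rewrite -lerBrDr -Fl_shift; apply: le_trans hN _.
apply: ler_sum => k _; rewrite floor_ge_int.
by rewrite lerBrDr addrC; exact: hsj k.
Qed.

Theorem lemma2 (R : realType) (G : finType) (NA : nat) (hNA : (0 < NA)%N)
  (dk : 'I_NA -> R) :
  optimal_value G dk
    (if (#|G|%:Z <= DeltaN (Ordinal hNA) dk)
     then dmax (Ordinal hNA) dk
     else min_candidate (Ordinal hNA) #|G| dk).
Proof.
set k0 := Ordinal hNA.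
have dmax_ub k : dk k <= dmax k0 dk by exact: le_bigmax.
have dmax_lub d : (forall k, dk k <= d) -> dmax k0 dk <= d.
  by move=> h; apply/bigmax_leP; split => // i _; exact: h.
case: ifP => hc.
  split; first exact: (feas_suff k0).
  by move=> d /feas_nec [h _]; exact: dmax_lub.
have hlt : DeltaN k0 dk < #|G|%:Z by rewrite ltNge hc.
split.
  rewrite /min_candidate; have [j ->] := bigop_attain (candidate #|G| dk) k0 (@min_or R).
  have hF := cand_F hNA #|G| dk j.
  apply: (feas_suff k0) => // k; apply: le_trans (dmax_ub k) _.
  rewrite leNgt; apply/negP => hl.
  have : Fl dk (candidate #|G| dk j) <= DeltaN k0 dk.
    apply: ler_sum => i _; apply: le_floor; rewrite lerD2r; exact: ltW.
  move=> h; have := le_lt_trans (le_trans hF h) hlt.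
  by rewrite ltxx.
move=> d /feas_nec [h1 h2]; have [j hj] := cand_le hNA k0 h2.
apply: le_trans hj; exact: bigmin_le.
Qed.
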